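(* Let $n\ge3$, let $H$ be a non-trivial finitely generated abelian group, let $G$ be a non-trivial group with a surjective homomorphism $\sigma\colon G\to S_n$, and let $W=H\wr_\sigma G=H^n\rtimes_\sigma G$. Assume that every abelian normal subgroup of $W$ is contained in $H^n$. Then $H^n$ is a characteristic subgroup of $W$.
   Context: $H\wr_\sigma G=H^n\rtimes_\sigma G$ is the semidirect product in which $G$ acts on $H^n$ by permuting coordinates through $\sigma$: $g\cdot(h_1,\dots,h_n)=(h_{\sigma(g)(1)},\dots,h_{\sigma(g)(n)})$ (with the composition convention in $S_n$ making this a left action); elements are pairs $(\mathbf h,g)$ with $(\mathbf h,g)(\mathbf k,x)=(\mathbf h\cdot g\mathbf k,gx)$, and $H^n$ is identified with $\{(\mathbf h,1)\}$. *)

(* Defs.v *)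
From HB Require Import structures.
From mathcomp Require Import all_boot all_order all_fingroup all_algebra.
Set Implicit Arguments. Unset Strict Implicit. Unset Printing Implicit Defensive.
Import GRing.Theory.

Section GroupNotions.
Variable W : groupType.
Local Open Scope group_scope.

Definition is_subgroup (S : W -> Prop) : Prop :=
  [/\ S 1, (forall x y, S x -> S y -> S (x * y)) & (forall x, S x -> S x^-1)].

Definition is_normal_subgroup (S : W -> Prop) : Prop :=
  is_subgroup S /\ (forall x y, S x -> S (x ^ y)).

Definition is_abelian_set (S : W -> Prop) : Prop :=
  forall x y, S x -> S y -> x * y = y * x.

Definition is_automorphism (f : W -> W) : Prop :=
  {morph f : x y / x * y} /\ bijective f.

Definition is_characteristic (S : W -> Prop) : Prop :=
  is_subgroup S /\
  forall f, is_automorphism f -> forall y, S y <-> exists2 x, S x & f x = y.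

End GroupNotions.

Definition finitely_generated_zmod (H : zmodType) : Prop :=
  exists s : seq H, forall h : H,
    exists c : 'I_(size s) -> int, h = (\sum_(i < size s) s`_i *~ c i)%R.

Definition nontrivial_zmod (H : zmodType) : Prop := exists h : H, h != 0%R.

Definition nontrivial_group (G : groupType) : Prop := exists g : G, g != 1%g.

(* (s * t) i = t (s i), so a homomorphism sigma makes this a left action.    *)

(* The carrier depends (trivially) on sigma so that the group structure,
   which does depend on sigma, can be found by canonical-structure inference. *)
Definition wreath (n : nat) (H : zmodType) (G : groupType)
  (sigma : {multiplicative G -> {perm 'I_n}}) : Type :=
  ({ffun 'I_n -> H} * G)%type.

Section Wreath.
Variables (n : nat) (H : zmodType) (G : groupType)
  (sigma : {multiplicative G -> {perm 'I_n}}).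
Local Open Scope group_scope.

Local Notation wreath := (@wreath n H G sigma).
HB.instance Definition _ := Choice.on wreath.

Definition wact (g : G) (h : {ffun 'I_n -> H}) : {ffun 'I_n -> H} :=
  [ffun i => h (sigma g i)].

Definition wmul (x y : wreath) : wreath :=
  ([ffun i => (x.1 i + wact x.2 y.1 i)%R], x.2 * y.2).
Definition wone : wreath := ([ffun=> 0%R], 1).
Definition winv (x : wreath) : wreath :=
  (wact x.2^-1 [ffun i => (- x.1 i)%R], x.2^-1).

Lemma sigma1 : sigma 1 = 1.
Proof.
have e : sigma (1 * 1) = sigma 1 * sigma 1 := gmulfM _ _.
rewrite monoid.mulg1 in e.
apply/permP=> i; rewrite perm1; apply: (@perm_inj _ (sigma 1)).
by rewrite -permM -e.
Qed.

Lemma wactM g g' h : wact (g * g') h = wact g (wact g' h).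
Proof. by apply/ffunP=> i; rewrite !ffunE gmulfM permM. Qed.

Lemma wact1 h : wact 1 h = h.
Proof. by apply/ffunP=> i; rewrite !ffunE sigma1 perm1. Qed.

Lemma wmulA : associative wmul.
Proof.
case=> [a g] [b k] [c l]; rewrite /wmul /=; congr (_, _); last exact: monoid.mulgA.
by apply/ffunP=> i; rewrite !ffunE addrA gmulfM permM.
Qed.

Lemma wmul1 : left_id wone wmul.
Proof.
case=> [a g]; rewrite /wmul /= monoid.mul1g; congr (_, _).
by apply/ffunP=> i; rewrite !ffunE sigma1 perm1 add0r.
Qed.

Lemma winvK : involutive winv.
Proof.
case=> [a g]; rewrite /winv /= monoid.invgK; congr (_, _).
by apply/ffunP=> i; rewrite !ffunE -(permM (sigma g)) -gmulfM monoid.mulgV sigma1 perm1 opprK.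
Qed.

Lemma winvM : {morph winv : x y / wmul x y >-> wmul y x}.
Proof.
case=> [a g] [b k]; rewrite /winv /wmul /= monoid.invgM; congr (_, _).
apply/ffunP=> i; rewrite !ffunE opprD addrC; congr (_ + _)%R.
  by rewrite -(permM (sigma (k^-1 * g^-1))) -gmulfM -monoid.mulgA monoid.mulVg monoid.mulg1.
by rewrite -(permM (sigma k^-1)) -gmulfM.
Qed.

HB.instance Definition _ :=
  isStarMonoid.Build wreath wmulA wmul1 winvK winvM.

Lemma wmulV : left_inverse (monoid.one : wreath) (@monoid.inv wreath) (@monoid.mul wreath).
Proof.
case=> [a g]; rewrite /monoid.mul /= /wmul /winv /= monoid.mulVg; congr (_, _).
by apply/ffunP=> i; rewrite !ffunE addNr.
Qed.

HB.instance Definition _ := StarMonoid_isGroup.Build wreath wmulV.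

Definition base : wreath -> Prop := fun w => w.2 = 1.

End Wreath.

(* Main.v *)
Require Import Defs.
From HB Require Import structures.
From mathcomp Require Import all_boot all_order all_fingroup all_algebra.

Section Aux.
Local Open Scope group_scope.
Variable W : groupType.

Lemma morph1 (f : W -> W) : {morph f : x y / x * y} -> f 1 = 1.
Proof. move=> fM; apply: (@mulgI _ (f 1)); by rewrite -fM !mulg1. Qed.

Lemma morphV (f : W -> W) : {morph f : x y / x * y} -> forall x, f x^-1 = (f x)^-1.
Proof.
move=> fM x; apply: (@mulgI _ (f x)); by rewrite -fM !mulgV morph1.
Qed.

Lemma morphJ (f : W -> W) : {morph f : x y / x * y} -> forall x y, f (x ^ y) = f x ^ f y.
Proof. by move=> fM x y; rewrite !conjgE !fM morphV. Qed.

Lemma image_abnormal (f : W -> W) (S : W -> Prop) :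
  is_automorphism f -> is_normal_subgroup S -> is_abelian_set S ->
  is_normal_subgroup (fun y => exists2 x, S x & f x = y) /\
  is_abelian_set (fun y => exists2 x, S x & f x = y).
Proof.
move=> [fM [g fg gf]] [[S1 SM SV] SJ] Sab; split; first split; first split.
- by exists 1 => //; rewrite morph1.
- by move=> _ _ [x Sx <-] [y Sy <-]; exists (x * y); [apply: SM | rewrite fM].
- by move=> _ [x Sx <-]; exists x^-1; [apply: SV | rewrite morphV].
- move=> _ y [x Sx <-]; exists (x ^ g y); first exact: SJ.
  by rewrite morphJ // gf.
- by move=> _ _ [x Sx <-] [y Sy <-]; rewrite -!fM Sab.
Qed.
End Aux.

Theorem theorem3p10 (n : nat) (H : zmodType) (G : groupType)
    (sigma : {multiplicative G -> {perm 'I_n}}) :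
  3 <= n ->
  nontrivial_zmod H -> finitely_generated_zmod H ->
  nontrivial_group G ->
  (forall s : {perm 'I_n}, exists g : G, sigma g = s) ->
  (forall A : @wreath n H G sigma -> Prop,
      is_normal_subgroup A -> is_abelian_set A ->
      forall w, A w -> @base n H G sigma w) ->
  is_characteristic (@base n H G sigma).
Proof.
move=> _ _ _ _ _ hyp.
set W := @wreath n H G sigma.
have Bn : is_normal_subgroup (@base n H G sigma).
  split; first split.
  - by [].
  - move=> x y; rewrite /base => hx hy.
    change (x.2 * y.2 = 1)%g; by rewrite hx hy mulg1.
  - move=> x; rewrite /base => hx.
    change (x.2^-1 = 1)%g; by rewrite hx invg1.
  - move=> x y; rewrite /base => hx.
    change (y.2^-1 * (x.2 * y.2) = 1)%g; by rewrite hx mul1g mulVg.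
have Ba : is_abelian_set (@base n H G sigma).
  case=> [a g] [b k]; rewrite /base /= => -> ->.
  rewrite /monoid.mul /= /wmul /=; congr (_, _).
  by apply/ffunP=> i; rewrite !ffunE sigma1 perm1 GRing.addrC.
split; first by case: Bn.
move=> f fA y; split; last first.
  move=> [x Bx <-]; have [N1 A1] := @image_abnormal _ f _ fA Bn Ba.
  by apply: (hyp _ N1 A1); exists x.
move=> By.
have [fM [g fg gf]] := fA.
have gA : is_automorphism g.
  split; last by exists f.
  by move=> a b; apply: (can_inj fg); rewrite fM !gf.
exists (g y); last by rewrite gf.
have [N1 A1] := @image_abnormal _ g _ gA Bn Ba.
apply: (hyp _ N1 A1).
by exists y.
Qed.
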